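(* Let $\mathbb{F}$ be a field, $n\ge 1$, and $d=2d'$ an even positive integer. Let $X^1,\dots,X^d$ be pairwise disjoint sets of variables $X^i=\{x^i_{jk}:j,k\in[n]\}$, $X=\bigcup_iX^i$, and $A^i$ the $n\times n$ matrix with $(j,k)$ entry $x^i_{jk}$. Let $B$ be the bijection from $X$ onto $Y\cup Z$ that maps each variable $x^{2i-1}_{jk}$ of an odd-numbered matrix to a distinct variable $y^{2i-1}_{jk}\in Y$ and each variable $x^{2i}_{jk}$ of an even-numbered matrix to a distinct variable $z^{2i}_{jk}\in Z$. Let $f_{ij}$ be the $(i,j)$ entry of $\prod_{k\in[d]}A^k$. Then: (1) for all $i,j\in[n]$, $\mathrm{rank}(M_{f_{ij}^B})=n^{d-1}$; (2) for any $i\in[n]$ and $j\neq j'\in[n]$, the sets of non-zero columns of $M_{f_{ij}^B}$ and $M_{f_{ij'}^B}$ are disjoint.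
   Context: $f^B$ denotes $f$ with each $x$ replaced by $B(x)$. For $g\in\mathbb{F}[Y,Z]$, the polynomial coefficient matrix $M_g$ has rows indexed by monic multilinear monomials $p$ in $Y$ and columns by monic multilinear monomials $q$ in $Z$, with $M_g(p,q)=G$ iff $g=pq\,G+Q$ uniquely with $G$ containing only variables present in $p,q$ and $Q$ having no monomial divisible by $pq$ that contains only variables present in $p,q$. For multilinear $g$ (as here) the entries of $M_g$ are field constants, namely $M_g(p,q)$ is the coefficient of $pq$ in $g$. *)

(* Defs.v *)
From HB Require Import structures.
From mathcomp Require Import all_boot all_order all_algebra.
From mathcomp Require Import mpoly.
Set Implicit Arguments. Unset Strict Implicit. Unset Printing Implicit Defensive.
Import GRing.Theory.
Local Open Scope ring_scope.

(* Variables X = union of X^1..X^d, x^l_{jk} indexed by (l, j, k) (0-based: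
   l : 'I_d is the matrix index, so matrix number l+1 in the paper). *)
Definition Xvar (n d : nat) := ('I_d * 'I_n * 'I_n)%type.
Definition NX (n d : nat) := #|{: Xvar n d}|.
Definition xv (n d : nat) (l : 'I_d) (j k : 'I_n) : 'I_(NX n d) :=
  enum_rank ((l, j, k) : Xvar n d).

Definition Amx (F : fieldType) (n d : nat) (l : 'I_d) : 'M[{mpoly F[NX n d]}]_n :=
  \matrix_(j, k) 'X_(xv l j k).

Definition prodA (F : fieldType) (n d : nat) : 'M[{mpoly F[NX n d]}]_n :=
  foldr (@mulmx _ n n n) 1%:M [seq Amx F n l | l <- enum 'I_d].

Definition fIMM (F : fieldType) (n d : nat) (i j : 'I_n) : {mpoly F[NX n d]} :=
  prodA F n d i j.

(* Variables Y u Z: (false, (i,j,k)) is y^{2i+1}_{jk} (0-based i : 'I_d'),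
   (true, (i,j,k)) is z^{2i+2}_{jk}. *)
Definition Wvar (n d' : nat) := ('I_d' * 'I_n * 'I_n)%type.
Definition YZvar (n d' : nat) := (bool * Wvar n d')%type.
Definition NYZ (n d' : nat) := #|{: YZvar n d'}|.
Definition yzv (n d' : nat) (b : bool) (w : Wvar n d') : 'I_(NYZ n d') :=
  enum_rank ((b, w) : YZvar n d').

Lemma half_ord_lt (d' : nat) (l : 'I_(d'.*2)) : (l./2 < d')%N.
Proof. by rewrite ltn_half_double. Qed.
Definition half_ord (d' : nat) (l : 'I_(d'.*2)) : 'I_d' := Ordinal (half_ord_lt l).

(* The bijection B : X -> Y u Z.  0-based matrix index l even (paper index
   l+1 odd) goes to Y, l odd (paper index even) goes to Z. *)
Definition Bvar (n d' : nat) (v : Xvar n d'.*2) : YZvar n d' :=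
  (odd v.1.1, (half_ord v.1.1, v.1.2, v.2)).

Definition applyB (F : fieldType) (n d' : nat) (g : {mpoly F[NX n d'.*2]})
  : {mpoly F[NYZ n d']} :=
  comp_mpoly [tuple 'X_(yzv (Bvar (enum_val v)).1 (Bvar (enum_val v)).2)
              | v < NX n d'.*2] g.

Definition monoYZ (n d' : nat) (p q : {set Wvar n d'}) : 'X_{1..NYZ n d'} :=
  (\sum_(w in p) mnm1 (yzv false w) + \sum_(w in q) mnm1 (yzv true w))%MM.

(* polynomial coefficient matrix M_g (g multilinear): rows = monic multilinear
   monomials in Y, columns = those in Z, entry = coefficient of pq in g.
   Rows/columns are enumerated via enum_val. *)
Definition Mcoef (F : fieldType) (n d' : nat) (g : {mpoly F[NYZ n d']})
  : 'M[F]_(#|{: {set Wvar n d'}}|, #|{: {set Wvar n d'}}|) :=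
  \matrix_(a, b) g@_(monoYZ (enum_val a) (enum_val b)).

Definition nzcols (F : fieldType) (m k : nat) (M : 'M[F]_(m, k)) : {set 'I_k} :=
  [set b | [exists a, M a b != 0]].

(* Main.v *)
Require Import Defs.
From HB Require Import structures.
From mathcomp Require Import all_boot all_order all_algebra.
From mathcomp Require Import mpoly.
Local Open Scope ring_scope.
Set Implicit Arguments. Unset Strict Implicit. Unset Printing Implicit Defensive.
Import GRing.Theory.
Lemma foldr_mx_entry (R : comNzRingType) (n : nat) (j : 'I_n) : forall (m : nat) (i : 'I_n) (As : seq 'M[R]_n),
  size As = m.+1 ->
  (foldr (@mulmx _ n n n) 1%:M As) i j =
  \sum_(t : m.-tuple 'I_n) \prod_(l < m.+1)
     (nth 0 As l) (nth j (i :: t) l) (nth j (i :: t) l.+1).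
Proof.
elim=> [|m IH] i [|A As] //=.
- case: As => // _.
  rewrite mulmx1 (big_pred1 [tuple]) ?big_ord1 // => t.
  by apply/esym/eqP/tuple0.
- move=> [hs]. rewrite mxE.
  under [LHS]eq_bigr => r _ do rewrite (IH r As hs) big_distrr /=.
  rewrite pair_big /=.
  rewrite (reindex (fun p : 'I_n * m.-tuple 'I_n => [tuple of p.1 :: p.2])) /=.
    apply: eq_bigr => -[r t] _ /=.
    by rewrite [RHS]big_ord_recl; congr (_ * _); apply: eq_bigr => l _; rewrite /= /bump /=.
  exists (fun t : m.+1.-tuple 'I_n => (thead t, behead_tuple t)) => [[r t] _|t _] /=.
    by congr pair; apply/val_inj.
  by rewrite [t in RHS]tuple_eta; apply/val_inj.
Qed.

Section S.
Variables (F : fieldType) (n e : nat).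
Local Notation d := (e.+1).*2.
Local Notation m := (e.*2).+1.

Definition kk (i j : 'I_n) (t : m.-tuple 'I_n) (l : nat) : 'I_n := nth j (i :: t) l.

Lemma fIMM_E i j : @fIMM F n d i j =
  \sum_(t : m.-tuple 'I_n) \prod_(l < d) 'X_(xv l (kk i j t l) (kk i j t l.+1)).
Proof.
rewrite /fIMM /prodA (@foldr_mx_entry _ n j m); last by rewrite size_map size_enum_ord.
apply: eq_bigr => t _; apply: eq_bigr => l _.
by rewrite (nth_map l) ?size_enum_ord // nth_ord_enum mxE.
Qed.

Definition W (i j : 'I_n) (t : m.-tuple 'I_n) (l : 'I_d) : Wvar n e.+1 :=
  (half_ord l, kk i j t l, kk i j t l.+1).

Definition mono i j t : 'X_{1..NYZ n e.+1} :=
  (\sum_(l < d) U_(yzv (odd l) (W i j t l)))%MM.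

Lemma applyB_X (l : 'I_d) a b :
  applyB ('X_(xv l a b) : {mpoly F[NX n d]}) = 'X_(yzv (odd l) (half_ord l, a, b)).
Proof.
by rewrite /applyB comp_mpolyXU -tnth_nth tnth_mktuple /xv enum_rankK.
Qed.

Lemma applyB_f i j : applyB (@fIMM F n d i j) = \sum_t 'X_[mono i j t].
Proof.
rewrite fIMM_E /applyB rmorph_sum; apply: eq_bigr => t _.
rewrite rmorph_prod /mono (big_morph (fun m => 'X_[m]) (@mpolyXD _ _) (@mpolyX0 _ _)).
by apply: eq_bigr => l _; rewrite -applyB_X.
Qed.


Lemma W_inj i j i' j' t t' (l l' : 'I_d) :
  odd l = odd l' -> W i j t l = W i' j' t' l' ->
  l = l' /\ kk i j t l = kk i' j' t' l /\ kk i j t l.+1 = kk i' j' t' l.+1.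
Proof.
move=> ho [hh ha hb].
have ll : l = l'.
  apply/val_inj => /=.
  by rewrite -[val l]odd_double_half -[val l']odd_double_half ho hh.
by subst l'.
Qed.

Definition Sset i j t (b : bool) : {set Wvar n e.+1} :=
  [set W i j t l | l : 'I_d & odd l == b].

Lemma sum_eq_in (T : finType) (A : {pred T}) x :
  (\sum_(y in A) (y == x) = (x \in A))%N.
Proof.
case: (boolP (x \in A)) => hx.
  by rewrite (bigD1 x) //= eqxx big1 // => y /andP[_ /negbTE ->].
by rewrite big1 // => y hy; apply/eqP; rewrite eqb0; apply: contraNneq hx => <-.
Qed.

Lemma yzv_eq b (w : Wvar n e.+1) b' w' : (yzv b w == yzv b' w') = ((b, w) == (b', w')).
Proof. by apply/eqP/eqP => [/enum_rank_inj|[-> ->]]. Qed.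

Lemma mono_coord i j t b w : mono i j t (yzv b w) = (w \in Sset i j t b) :> nat.
Proof.
rewrite /mono mnm_sumE.
under eq_bigr => l _ do rewrite mnm1E yzv_eq.
case: (boolP (w \in Sset i j t b)) => [/imsetP [l0 hl0 ->]|hw].
  move: hl0; rewrite inE => /eqP hb; subst b.
  rewrite (bigD1 l0) //= eqxx /= big1 // => l hl.
  apply/eqP; rewrite eqb0; apply/negP => /eqP E; have /= ho := congr1 fst E; have /= hW := congr1 snd E.
  by have [] := W_inj ho hW; move/eqP: hl.
rewrite big1 // => l _; apply/eqP; rewrite eqb0; apply/negP => /eqP E; have /= ho := congr1 fst E; have /= hW := congr1 snd E.
by move: hw; rewrite -hW; apply/negP/negPn/imsetP; exists l; rewrite // inE ho.
Qed.

Lemma monoYZ_coord (p q : {set Wvar n e.+1}) b w :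
  monoYZ p q (yzv b w) = (w \in (if b then q else p)) :> nat.
Proof.
rewrite /monoYZ mnmDE !mnm_sumE.
under eq_bigr => x _ do rewrite mnm1E yzv_eq.
under [X in (_ + X)%N]eq_bigr => x _ do rewrite mnm1E yzv_eq.
case: b.
  rewrite big1 // add0n -(sum_eq_in q w); apply: eq_bigr => x _.
  by rewrite xpair_eqE.
rewrite [X in (_ + X)%N]big1 // addn0 -(sum_eq_in p w); apply: eq_bigr => x _.
by rewrite xpair_eqE.
Qed.

Lemma nat_of_bool_inj (b1 b2 : bool) : (b1 : nat) = b2 -> b1 = b2.
Proof. by case: b1; case: b2. Qed.

Lemma mono_eq i j t p q :
  (mono i j t == monoYZ p q) = (Sset i j t false == p) && (Sset i j t true == q).
Proof.
apply/eqP/andP => [E|[/eqP hp /eqP hq]].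
  split; apply/eqP/setP => w; apply/nat_of_bool_inj.
    by have := congr1 (fun mm : 'X_{1..NYZ n e.+1} => mm (yzv false w)) E; rewrite /= mono_coord monoYZ_coord.
  by have := congr1 (fun mm : 'X_{1..NYZ n e.+1} => mm (yzv true w)) E; rewrite /= mono_coord monoYZ_coord.
apply/mnmP => v; rewrite -(enum_valK v); case: (enum_val v) => b w.
rewrite -/(yzv b w) mono_coord monoYZ_coord.
by case: b; rewrite ?hp ?hq.
Qed.

Lemma Sset_kk i j j' t t' b : Sset i j t b = Sset i j' t' b ->
  forall l : 'I_d, odd l = b ->
  kk i j t l = kk i j' t' l /\ kk i j t l.+1 = kk i j' t' l.+1.
Proof.
move=> E l hl.
have : W i j t l \in Sset i j' t' b by rewrite -E; apply/imsetP; exists l; rewrite // inE hl.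
case/imsetP => l'; rewrite inE => /eqP hl' hW.
have ho : odd l = odd l' by rewrite hl hl'.
by have [ll [h1 h2]] := W_inj ho hW.
Qed.

Lemma Sset_inj i j t t' b : Sset i j t b = Sset i j t' b -> t = t'.
Proof.
move=> E; apply: eq_from_tnth => x; rewrite !(tnth_nth j).
have -> : nth j t x = kk i j t x.+1 by [].
have -> : nth j t' x = kk i j t' x.+1 by [].
have h1 : (x.+1 < d)%N by rewrite doubleS ltnS; exact: ltn_ord x.
case: (boolP (odd x.+1 == b)) => h.
  by have [] := Sset_kk E (l := Ordinal h1) (eqP h).
have h2 : odd x = b by move: h; rewrite /= ; case: (b); case: (odd x).
by have [] := Sset_kk E (l := Ordinal (ltnW h1)) h2.
Qed.

Lemma Sset_j i j j' t t' : Sset i j t true = Sset i j' t' true -> j = j'.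
Proof.
move=> E.
have hm : (m < d)%N by rewrite doubleS.
have ho : odd m = true by rewrite /= odd_double.
have [_] := Sset_kk E (l := Ordinal hm) ho.
by rewrite /kk /= !nth_default ?size_tuple.
Qed.

Definition Sm i j b : 'M[F]_(#|{: m.-tuple 'I_n}|, #|{: {set Wvar n e.+1}}|) :=
  \matrix_(k, a) ((enum_val a == Sset i j (enum_val k) b)%:R).

Lemma Mentry i j a b : Mcoef (applyB (@fIMM F n d i j)) a b =
  \sum_(t : m.-tuple 'I_n)
     ((Sset i j t false == enum_val a) && (Sset i j t true == enum_val b))%:R.
Proof.
rewrite mxE applyB_f raddf_sum; apply: eq_bigr => t _.
by rewrite /= mcoeffX mono_eq.
Qed.

Lemma Mprod i j : Mcoef (applyB (@fIMM F n d i j)) = (Sm i j false)^T *m Sm i j true.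
Proof.
apply/matrixP => a b; rewrite Mentry mxE.
rewrite (big_enum_val (fun t => ((Sset i j t false == enum_val a) && (Sset i j t true == enum_val b))%:R)) /=.
by apply: eq_bigr => k _; rewrite !mxE -natrM mulnb [enum_val a == _]eq_sym [enum_val b == _]eq_sym.
Qed.

Lemma Sm_id i j b : Sm i j b *m (Sm i j b)^T = 1%:M.
Proof.
apply/matrixP => k k'; rewrite !mxE.
under eq_bigr => a _ do rewrite !mxE -natrM.
rewrite -(big_enum_val (fun s => ((s == Sset i j (enum_val k) b) * (s == Sset i j (enum_val k') b))%:R)) /=.
rewrite (bigD1 (Sset i j (enum_val k) b)) //= eqxx mul1n big1 ?addr0.
  have -> : (Sset i j (enum_val k) b == Sset i j (enum_val k') b) = (k == k').
    by apply/eqP/eqP => [/Sset_inj/enum_val_inj|->].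
  by [].
by move=> s /negbTE ->.
Qed.

End S.

Theorem lemma12' (F : fieldType) (n d' : nat) (hn : (0 < n)%N) (hd : (0 < d')%N) :
  (forall i j : 'I_n,
      \rank (Mcoef (applyB (@fIMM F n d'.*2 i j))) = (n ^ (d'.*2 - 1))%N) /\
  (forall i j j' : 'I_n, j != j' ->
      [disjoint nzcols (Mcoef (applyB (@fIMM F n d'.*2 i j)))
              & nzcols (Mcoef (applyB (@fIMM F n d'.*2 i j')))]).
Proof.
case: d' hd => // e _.
have em : ((e.+1).*2 - 1 = (e.*2).+1)%N by rewrite doubleS subn1.
split.
  move=> i j; rewrite em Mprod.
  apply/eqP; rewrite eqn_leq; apply/andP; split.
    by rewrite (leq_trans (mxrankM_maxl _ _)) // mxrank_tr (leq_trans (rank_leq_row _)) // card_tuple card_ord.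
  rewrite -{1}(card_ord n) -card_tuple -{1}(mxrank1 F #|{: (e.*2).+1.-tuple 'I_n}|).
  rewrite -[X in \rank X](mulmx1 1%:M) -{1}(@Sm_id F n e i j false) -(@Sm_id F n e i j true).
  rewrite mulmxA (leq_trans (mxrankM_maxl _ _)) //.
  by rewrite -mulmxA (leq_trans (mxrankM_maxr _ _)).
move=> i j j' hj; rewrite -setI_eq0; apply/eqP/setP => b.
rewrite !inE; apply/negbTE/negP => /andP[/existsP [a ha] /existsP [a' ha']].
have ex : forall jj a, Mcoef (applyB (@fIMM F n (e.+1).*2 i jj)) a b != 0 ->
    exists t, Sset i jj t true = enum_val b.
  move=> jj a0; rewrite Mentry => hs.
  case: (pickP (fun t => Sset i jj t true == enum_val b)) => [t /eqP ht|hnone].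
    by exists t.
  by move: hs; rewrite big1 ?eqxx // => t _; rewrite hnone andbF.
have [t ht] := ex _ _ ha; have [t' ht'] := ex _ _ ha'.
by move: hj; rewrite (Sset_j (etrans ht (esym ht'))) eqxx.
Qed.


Unset Implicit Arguments.
Set Strict Implicit.
Theorem lemma12 (F : fieldType) (n d' : nat) (hn : (0 < n)%N) (hd : (0 < d')%N) :
  (forall i j : 'I_n,
      \rank (Mcoef (applyB (@fIMM F n d'.*2 i j))) = (n ^ (d'.*2 - 1))%N) /\
  (forall i j j' : 'I_n, j != j' ->
      [disjoint nzcols (Mcoef (applyB (@fIMM F n d'.*2 i j)))
              & nzcols (Mcoef (applyB (@fIMM F n d'.*2 i j')))]).
Proof. exact: lemma12' hn hd. Qed.
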